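(* For each $k\le n$, the optimal value of $$\mathcal U^\star_k=\min_{x\in\mathbb R^n,\,y\in\mathbb R^k}\ \langle c,x\rangle+\sum_{i=1}^k\lambda_iy_i^2+\eta^{-1}\|x\|_2^2+\theta\|x\|_0\ \text{ s.t. } Ax\le b,\ \sqrt{\lambda_i}y_i=\sqrt{\lambda_i}\langle v_i,x\rangle,\ i=1,\dots,k$$ satisfies $\mathcal U^\star_k=\min_{z\in\{0,1\}^n}\max_{\alpha\in\mathbb R^k,\beta\in\mathbb R^m_+}H(z,\alpha,\beta)$, where $$H(z,\alpha,\beta)=\theta\sum_{j=1}^nz_j-\beta^\top b-\tfrac14\|\alpha\|_2^2-\tfrac{\eta}{4}(c+V\sqrt\Lambda\alpha+A^\top\beta)^\top\mathrm{diag}(z)(c+V\sqrt\Lambda\alpha+A^\top\beta).$$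
   Context: Let $Q\in\mathbb R^{n\times n}$ be symmetric positive semidefinite with eigendecomposition $Q=\sum_{i=1}^n\lambda_i v_iv_i^\top$, $\lambda_1\ge\cdots\ge\lambda_n\ge0$, $\{v_i\}$ orthonormal. Let $c\in\mathbb R^n$, $A\in\mathbb R^{m\times n}$, $b\in\mathbb R^m$, $\eta>0$, $\theta>0$, $k\le n$, $V=[v_1,\dots,v_k]$, $\Lambda=\mathrm{diag}(\lambda_1,\dots,\lambda_k)$. $\|x\|_0$ is the number of nonzero entries of $x$; infeasible problems have value $+\infty$. *)

(* Defs.v *)
From HB Require Import structures.
From mathcomp Require Import all_boot all_order all_algebra.
From mathcomp Require Import classical_sets boolp reals ereal.
Set Implicit Arguments. Unset Strict Implicit. Unset Printing Implicit Defensive.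
Import Order.TTheory GRing.Theory Num.Theory.
Local Open Scope ring_scope.
Local Open Scope classical_set_scope.

Section Defs.
Variable R : realType.

Definition dotv (p : nat) (u w : 'cV[R]_p) : R := \sum_(j < p) u j 0 * w j 0.

Definition sqnorm (p : nat) (u : 'cV[R]_p) : R := \sum_(j < p) u j 0 ^+ 2.

Definition l0norm (p : nat) (x : 'cV[R]_p) : nat := #|[set j : 'I_p | x j 0 != 0]|.

Definition Vmat (n k : nat) (hk : (k <= n)%N) (v : 'I_n -> 'cV[R]_n) : 'M[R]_(n, k) :=
  \matrix_(i < n, j < k) v (widen_ord hk j) i 0.

Definition sqrtLam (n k : nat) (hk : (k <= n)%N) (lam : 'I_n -> R) : 'M[R]_k :=
  \matrix_(i < k, j < k) (if i == j then Num.sqrt (lam (widen_ord hk i)) else 0).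

Definition Uobj (n m k : nat) (hk : (k <= n)%N) (lam : 'I_n -> R)
  (c : 'cV[R]_n) (eta theta : R) (x : 'cV[R]_n) (y : 'cV[R]_k) : R :=
  dotv c x + \sum_(i < k) lam (widen_ord hk i) * y i 0 ^+ 2
  + eta^-1 * sqnorm x + theta * (l0norm x)%:R.

Definition Ufeas (n m k : nat) (hk : (k <= n)%N) (lam : 'I_n -> R)
  (v : 'I_n -> 'cV[R]_n) (A : 'M[R]_(m, n)) (b : 'cV[R]_m)
  (x : 'cV[R]_n) (y : 'cV[R]_k) : Prop :=
  (forall i : 'I_m, (A *m x) i 0 <= b i 0) /\
  (forall i : 'I_k, Num.sqrt (lam (widen_ord hk i)) * y i 0
                    = Num.sqrt (lam (widen_ord hk i)) * dotv (v (widen_ord hk i)) x).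

(* Optimal value U*_k (infimum in extended reals; +oo if infeasible) *)
Definition Ustar (n m k : nat) (hk : (k <= n)%N) (lam : 'I_n -> R)
  (v : 'I_n -> 'cV[R]_n) (c : 'cV[R]_n) (A : 'M[R]_(m, n)) (b : 'cV[R]_m)
  (eta theta : R) : \bar R :=
  ereal_inf [set r : \bar R | exists (x : 'cV[R]_n) (y : 'cV[R]_k),
              Ufeas hk lam v A b x y /\ r = (Uobj m hk lam c eta theta x y)%:E].

Definition Hfun (n m k : nat) (hk : (k <= n)%N) (lam : 'I_n -> R)
  (v : 'I_n -> 'cV[R]_n) (c : 'cV[R]_n) (A : 'M[R]_(m, n)) (b : 'cV[R]_m)
  (eta theta : R) (z : {ffun 'I_n -> bool}) (alpha : 'cV[R]_k) (beta : 'cV[R]_m) : R :=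
  let w := c + Vmat hk v *m sqrtLam hk lam *m alpha + A^T *m beta in
  theta * (\sum_(j < n) (z j)%:R) - dotv beta b - 4^-1 * sqnorm alpha
  - eta / 4 * (\sum_(j < n) (z j)%:R * w j 0 ^+ 2).

Definition minmaxH (n m k : nat) (hk : (k <= n)%N) (lam : 'I_n -> R)
  (v : 'I_n -> 'cV[R]_n) (c : 'cV[R]_n) (A : 'M[R]_(m, n)) (b : 'cV[R]_m)
  (eta theta : R) : \bar R :=
  \big[Order.min/+oo%E]_(z : {ffun 'I_n -> bool})
    ereal_sup [set r : \bar R | exists (alpha : 'cV[R]_k) (beta : 'cV[R]_m),
              (forall i, 0 <= beta i 0) /\
              r = (Hfun hk lam v c A b eta theta z alpha beta)%:E].

End Defs.

(* Main.v *)
Require Import Defs.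
From HB Require Import structures.
From mathcomp Require Import all_boot all_order all_algebra.
From mathcomp Require Import classical_sets boolp reals ereal.
From mathcomp Require Import ring lra.
Import Order.TTheory GRing.Theory Num.Theory.
Local Open Scope ring_scope.

Section Key.
Variable R : realType.
Variable N : nat.
Notation vec := 'cV[R]_N.

Lemma dotvC (u w : vec) : dotv u w = dotv w u.
Proof. by apply: eq_bigr => j _; rewrite mulrC. Qed.
Lemma dotvDl (u1 u2 w : vec) : dotv (u1 + u2) w = dotv u1 w + dotv u2 w.
Proof. by rewrite /dotv -big_split; apply: eq_bigr => j _; rewrite mxE mulrDl. Qed.
Lemma dotvBl (u1 u2 w : vec) : dotv (u1 - u2) w = dotv u1 w - dotv u2 w.
Proof. by rewrite /dotv -sumrB; apply: eq_bigr => j _; rewrite !mxE mulrBl. Qed.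
Lemma dotvZl (a : R) (u w : vec) : dotv (a *: u) w = a * dotv u w.
Proof. by rewrite /dotv mulr_sumr; apply: eq_bigr => j _; rewrite mxE mulrA. Qed.
Lemma dotvDr (u w1 w2 : vec) : dotv u (w1 + w2) = dotv u w1 + dotv u w2.
Proof. by rewrite dotvC dotvDl !(dotvC _ u). Qed.
Lemma dotvBr (u w1 w2 : vec) : dotv u (w1 - w2) = dotv u w1 - dotv u w2.
Proof. by rewrite dotvC dotvBl !(dotvC _ u). Qed.
Lemma dotvZr (a : R) (u w : vec) : dotv u (a *: w) = a * dotv u w.
Proof. by rewrite dotvC dotvZl dotvC. Qed.
Lemma dotv_ge0 (u : vec) : 0 <= dotv u u.
Proof. by apply: sumr_ge0 => j _; rewrite -expr2 sqr_ge0. Qed.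
Lemma dotv_eq0 (u : vec) : dotv u u = 0 -> u = 0.
Proof.
move=> H; apply/matrixP => i j; rewrite mxE (ord1 j).
have H0 : forall j : 'I_N, predT j -> 0 <= u j 0 * u j 0.
  by move=> ? _; rewrite -expr2 sqr_ge0.
have := @psumr_eq0P _ _ predT (fun j => u j 0 * u j 0) H0 H i isT.
by move=> /eqP; rewrite mulf_eq0 orbb => /eqP ->.
Qed.

Definition comb (G : nat -> vec) (mu : nat -> R) (m : nat) : vec :=
  \sum_(i < m) mu i *: G i.
Definition combr (h : nat -> R) (mu : nat -> R) (m : nat) : R :=
  \sum_(i < m) mu i * h i.
Definition ext {X : Type} (F : nat -> X) (x : X) (m : nat) : nat -> X :=
  fun i => if (i < m)%N then F i else x.

Lemma comb0 G mu : comb G mu 0 = 0. Proof. by rewrite /comb big_ord0. Qed.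
Lemma combr0 h mu : combr h mu 0 = 0. Proof. by rewrite /combr big_ord0. Qed.

Lemma comb_ext G mu x m : comb G (ext mu x m) m.+1 = comb G mu m + x *: G m.
Proof.
rewrite /comb big_ord_recr /= /ext ltnn; congr (_ + _).
by apply: eq_bigr => i _; rewrite /= ltn_ord.
Qed.
Lemma comb_extF G g mu m : comb (ext G g m) mu m.+1 = comb G mu m + mu m *: g.
Proof.
rewrite /comb big_ord_recr /= /ext ltnn; congr (_ + _).
by apply: eq_bigr => i _; rewrite /= ltn_ord.
Qed.
Lemma combr_ext h mu x m : combr h (ext mu x m) m.+1 = combr h mu m + x * h m.
Proof.
rewrite /combr big_ord_recr /= /ext ltnn; congr (_ + _).
by apply: eq_bigr => i _; rewrite /= ltn_ord.
Qed.
Lemma combr_extF h g mu m : combr (ext h g m) mu m.+1 = combr h mu m + mu m * g.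
Proof.
rewrite /combr big_ord_recr /= /ext ltnn; congr (_ + _).
by apply: eq_bigr => i _; rewrite /= ltn_ord.
Qed.
Lemma comb_lin G mu nu a b m :
  comb G (fun i => a * mu i + b * nu i) m = a *: comb G mu m + b *: comb G nu m.
Proof.
rewrite /comb !scaler_sumr -big_split; apply: eq_bigr => i _.
by rewrite scalerDl !scalerA.
Qed.
Lemma combr_lin h mu nu a b m :
  combr h (fun i => a * mu i + b * nu i) m = a * combr h mu m + b * combr h nu m.
Proof.
rewrite /combr !mulr_sumr -big_split; apply: eq_bigr => i _.
by rewrite mulrDl !mulrA.
Qed.
Lemma dotv_comb G mu m t : dotv (comb G mu m) t = \sum_(i < m) mu i * dotv (G i) t.
Proof.
rewrite /comb; elim: m => [|m IH]; first by rewrite !big_ord0 /dotv big1 // => j _; rewrite mxE mul0r.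
by rewrite !big_ord_recr /= dotvDl dotvZl IH.
Qed.

Lemma norm_id (s a t W : vec) : t = a - 2^-1 *: W ->
  dotv (s - a) (s - a) = dotv (s - t) (s - t) + dotv (t - a) (t - a) - dotv W (s - t).
Proof.
move=> ->; rewrite /dotv -big_split -sumrB; apply: eq_bigr => j _; rewrite !mxE.
by rewrite /=; field.
Qed.


Definition Cert (G : nat -> vec) (h : nat -> R) m (E : nat -> vec) (f : nat -> R) p :=
  exists mu nu, (forall i, (i < m)%N -> 0 <= mu i) /\
    comb G mu m + comb E nu p = 0 /\ combr h mu m + combr f nu p < 0.
Definition Sol (G : nat -> vec) (h : nat -> R) m (E : nat -> vec) (f : nat -> R) p (a : vec) :=
  exists t mu nu, (forall i, (i < m)%N -> 0 <= mu i) /\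
    (forall i, (i < m)%N -> dotv (G i) t <= h i) /\
    (forall i, (i < p)%N -> dotv (E i) t = f i) /\
    t = a - 2^-1 *: (comb G mu m + comb E nu p) /\
    combr h mu m = \sum_(i < m) mu i * dotv (G i) t.

Lemma key0 G h E p : forall f a, Cert G h 0 E f p \/ Sol G h 0 E f p a.
Proof.
elim: p => [|p IH] f a.
  right; exists a, (fun _ => 0), (fun _ => 0); split => //; split => //; split => //.
  by rewrite !comb0 addr0 scaler0 subr0 combr0 big_ord0.
case: (IH f a) => [[mu [nu [_ [Hc Hr]]]] | [t [mu [nu [_ [_ [Heq [Ht _]]]]]]]].
  left; exists mu, (ext nu 0 p); split => //.
  by rewrite comb_ext combr_ext scale0r mul0r !addr0.
rewrite comb0 add0r in Ht.
case: (IH (fun _ => 0) (E p)) => [[mu' [nu' [_ [Hc' Hr']]]] | [q [mu0 [nu' [_ [_ [Heq' [Hq _]]]]]]]].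
  exfalso; move: Hr'; rewrite combr0 add0r /combr big1 ?ltxx // => i _; exact: mulr0.
rewrite comb0 add0r in Hq.
have Hd : dotv (E p) q = dotv q q.
  have -> : E p = q + 2^-1 *: comb E nu' p by rewrite Hq subrK.
  rewrite dotvDl dotvZl dotv_comb big1 ?mulr0 ?addr0 // => i _.
  by rewrite Heq' ?mulr0.
case: (eqVneq (dotv (E p) q) 0) => Hd0.
  have q0 : q = 0 by apply: dotv_eq0; rewrite -Hd.
  have Ep : E p = 2^-1 *: comb E nu' p by rewrite -[E p]subr0 -q0 Hq opprB addrC subrK.
  have Hdt : dotv (E p) t = 2^-1 * combr f nu' p.
    rewrite Ep dotvZl dotv_comb /combr; congr (_ * _); apply: eq_bigr => i _.
    by rewrite Heq.
  case: (eqVneq (dotv (E p) t - f p) 0) => Hdel.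
    right; exists t, (fun _ => 0), (ext nu 0 p); split => //; split => //; split.
      move=> i; rewrite ltnS leq_eqVlt => /orP [/eqP -> | /Heq //].
      by apply/eqP; rewrite -subr_eq0 Hdel.
    split; last by rewrite combr0 big_ord0.
    by rewrite comb0 add0r comb_ext scale0r addr0.
  left; exists (fun _ => 0), (ext (fun i => (- (dotv (E p) t - f p) * 2^-1) * nu' i + 0 * nu i) (dotv (E p) t - f p) p).
  split => //; rewrite comb0 combr0 !add0r comb_ext combr_ext comb_lin combr_lin.
  rewrite scale0r addr0 mul0r addr0; split.
    by rewrite Ep scalerA -scalerDl mulNr addNr scale0r.
  set d := dotv (E p) t - f p.
  have -> : combr f nu' p = 2 * dotv (E p) t by rewrite Hdt; field.
  have -> : f p = dotv (E p) t - d by rewrite /d opprB addrC subrK.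
  have : 0 < d * d by rewrite -expr2 exprn_even_gt0 //=.
  move: (d) => dd; lra.
set th := (f p - dotv (E p) t) / dotv (E p) q.
right; exists (t + th *: q), (fun _ => 0), (ext (fun i => 1 * nu i + th * nu' i) (-(2*th)) p).
split => //; split => //; split.
  move=> i; rewrite ltnS leq_eqVlt => /orP [/eqP -> | Hi].
    by rewrite dotvDr dotvZr /th; field.
  by rewrite dotvDr dotvZr Heq // Heq' // mulr0 addr0.
split; last by rewrite combr0 big_ord0.
rewrite comb0 add0r comb_ext comb_lin scale1r {1}Ht Hq.
move: (comb E nu p) (comb E nu' p) => C1 C2.
by apply/matrixP => i j; rewrite !mxE /=; field.
Qed.

Lemma key G h m : forall E f p a, Cert G h m E f p \/ Sol G h m E f p a.
Proof.
elim: m => [|m IH] E f p a; first exact: key0.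
case: (IH E f p a) => [[mu [nu [Hmu [Hc Hr]]]] | [t [mu [nu [Hmu [Hle [Heq [Ht Hsl]]]]]]]].
  left; exists (ext mu 0 m), nu; split.
    by move=> i _; rewrite /ext; case: ifP => // /Hmu.
  by rewrite comb_ext combr_ext scale0r mul0r !addr0.
have Hext : forall (mu0 : nat -> R) x, (forall i, (i < m)%N -> 0 <= mu0 i) -> 0 <= x ->
    forall i, (i < m.+1)%N -> 0 <= ext mu0 x m i.
  by move=> mu0 x H0 hx i _; rewrite /ext; case: ifP => // /H0.
case: (leP (dotv (G m) t) (h m)) => Hgm.
  right; exists t, (ext mu 0 m), nu; split; first exact: Hext.
  split.
    move=> i; rewrite ltnS leq_eqVlt => /orP [/eqP -> // | /Hle //].
  split => //; split; first by rewrite comb_ext scale0r addr0.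
  rewrite combr_ext big_ord_recr /= Hsl /ext ltnn !mul0r !addr0.
  by apply: eq_bigr => i _; rewrite ltn_ord.
case: (IH (ext E (G m) p) (ext f (h m) p) p.+1 a) =>
  [[mu' [nu' [Hmu2 [Hc Hr]]]] | [t' [mu' [nu' [Hmu2 [Hle' [Heq' [Ht' Hsl']]]]]]]].
  rewrite comb_extF in Hc; rewrite combr_extF in Hr.
  case: (leP 0 (nu' p)) => Hnp.
    left; exists (ext mu' (nu' p) m), nu'; split; first exact: Hext.
    rewrite comb_ext combr_ext; split; last by move: Hr; lra.
    by rewrite -Hc (addrC (comb E _ _)) addrA.
  exfalso.
  have := congr1 (fun w => dotv w t) Hc; rewrite /= !dotvDl dotvZl !dotv_comb.
  have -> : \sum_(i < p) nu' i * dotv (E i) t = combr f nu' p.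
    by apply: eq_bigr => i _; rewrite Heq.
  have : \sum_(i < m) mu' i * dotv (G i) t <= combr h mu' m.
    by apply: ler_sum => i _; apply: ler_wpM2l; [apply: Hmu2 (ltn_ord i) | apply: Hle (ltn_ord i)].
  have : nu' p * h m > nu' p * dotv (G m) t by rewrite ltr_nM2l.
  have -> : dotv 0 t = 0 by rewrite /dotv big1 // => j _; rewrite mxE mul0r.
  move: Hr; lra.
rewrite comb_extF in Ht'.
have Hgt' : dotv (G m) t' = h m by have := Heq' p; rewrite /ext ltnn; apply.
have Eq1 : forall i, (i < p)%N -> dotv (E i) t' = f i.
  by move=> i Hi; have := Heq' i; rewrite /ext Hi; apply; rewrite ltnS ltnW.
case: (leP 0 (nu' p)) => Hnp.
  right; exists t', (ext mu' (nu' p) m), nu'; split; first exact: Hext.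
  split.
    move=> i; rewrite ltnS leq_eqVlt => /orP [/eqP -> | /Hle' //].
    by rewrite Hgt'.
  split.
    exact: Eq1.
  split; first by rewrite comb_ext Ht' (addrC (comb E _ _)) addrA.
  rewrite combr_ext big_ord_recr /= Hsl' /ext ltnn Hgt'; congr (_ + _).
  by apply: eq_bigr => i _; rewrite ltn_ord.
exfalso.
have N1 := @norm_id t' a t _ Ht.
have N2 := @norm_id t a t' _ Ht'.
have D1 : dotv (comb G mu m + comb E nu p) (t' - t) <= 0.
  rewrite dotvDl !dotv_comb.
  have -> : \sum_(i < p) nu i * dotv (E i) (t' - t) = 0.
    by rewrite big1 // => i _; rewrite dotvBr Heq ?Eq1 // subrr mulr0.
  rewrite addr0.
  have -> : \sum_(i < m) mu i * dotv (G i) (t' - t) =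
     \sum_(i < m) mu i * dotv (G i) t' - combr h mu m.
    by rewrite Hsl -sumrB; apply: eq_bigr => i _; rewrite dotvBr mulrBr.
  rewrite subr_le0 /combr; apply: ler_sum => i _; apply: ler_wpM2l; [apply: Hmu (ltn_ord i) | apply: Hle' (ltn_ord i)].
have D2 : dotv (comb G mu' m + (comb E nu' p + nu' p *: G m)) (t - t') < 0.
  rewrite !dotvDl dotvZl !dotv_comb.
  have -> : \sum_(i < p) nu' i * dotv (E i) (t - t') = 0.
    by rewrite big1 // => i _; rewrite dotvBr Heq ?Eq1 // subrr mulr0.
  rewrite add0r.
  have -> : \sum_(i < m) mu' i * dotv (G i) (t - t') =
     \sum_(i < m) mu' i * dotv (G i) t - combr h mu' m.
    by rewrite Hsl' -sumrB; apply: eq_bigr => i _; rewrite dotvBr mulrBr.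
  have : \sum_(i < m) mu' i * dotv (G i) t <= combr h mu' m.
    by rewrite /combr; apply: ler_sum => i _; apply: ler_wpM2l; [apply: Hmu2 (ltn_ord i) | apply: Hle (ltn_ord i)].
  rewrite dotvBr Hgt'.
  have : nu' p * h m > nu' p * dotv (G m) t by rewrite ltr_nM2l.
  lra.
have P1 := dotv_ge0 (t' - t).
have P2 := dotv_ge0 (t - t').
have P3 := dotv_ge0 (t - a).
have P4 := dotv_ge0 (t' - a).
move: N1 N2 D1 D2 P1 P2 P3 P4.
move: (dotv (comb G mu m + comb E nu p) (t' - t)) => x5.
move: (dotv (comb G mu' m + (comb E nu' p + nu' p *: G m)) (t - t')) => x6.
move: (dotv (t' - a) (t' - a)) (dotv (t - a) (t - a)) (dotv (t' - t) (t' - t)) (dotv (t - t') (t - t')).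
move=> x1 x2 x3 x4; lra.
Qed.

End Key.
Arguments comb {R N}.
Arguments combr {R}.
Arguments Cert {R N}.
Arguments Sol {R N}.

Section App.
Variables (R : realType) (n m k : nat) (hk : (k <= n)%N) (lam : 'I_n -> R)
  (v : 'I_n -> 'cV[R]_n) (c : 'cV[R]_n) (A : 'M[R]_(m, n)) (b : 'cV[R]_m) (eta theta : R).

Let sl (l : 'I_k) : R := Num.sqrt (lam (widen_ord hk l)).
Let vv (l : 'I_k) := v (widen_ord hk l).

Lemma VSa_entry (al : 'cV[R]_k) j :
  (Vmat hk v *m sqrtLam hk lam *m al) j 0 = \sum_(l < k) vv l j 0 * (sl l * al l 0).
Proof.
rewrite mxE; apply: eq_bigr => l _; rewrite mxE (bigD1 l) //= big1 => [|l' Hl'].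
  by rewrite !mxE eqxx addr0 -mulrA.
by rewrite /sqrtLam !mxE (negbTE Hl') mulr0.
Qed.

Lemma ATb_entry (be : 'cV[R]_m) j : (A^T *m be) j 0 = \sum_(i < m) A i j * be i 0.
Proof. by rewrite mxE; apply: eq_bigr => i _; rewrite mxE. Qed.

Lemma Ax_entry (x : 'cV[R]_n) i : (A *m x) i 0 = \sum_(j < n) A i j * x j 0.
Proof. by rewrite mxE. Qed.

Lemma cx_decomp (al : 'cV[R]_k) (be : 'cV[R]_m) (x : 'cV[R]_n) :
  dotv c x = \sum_(j < n) (c + Vmat hk v *m sqrtLam hk lam *m al + A^T *m be) j 0 * x j 0
    - \sum_(l < k) al l 0 * (sl l * dotv (vv l) x) - \sum_(i < m) be i 0 * (A *m x) i 0.
Proof.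
have -> : \sum_(j < n) (c + Vmat hk v *m sqrtLam hk lam *m al + A^T *m be) j 0 * x j 0 =
  dotv c x + \sum_(j < n) (Vmat hk v *m sqrtLam hk lam *m al) j 0 * x j 0
  + \sum_(j < n) (A^T *m be) j 0 * x j 0.
  by rewrite /dotv -!big_split; apply: eq_bigr => j _; rewrite !mxE !mulrDl.
have -> : \sum_(j < n) (Vmat hk v *m sqrtLam hk lam *m al) j 0 * x j 0 =
   \sum_(l < k) al l 0 * (sl l * dotv (vv l) x).
  under eq_bigr do rewrite VSa_entry mulr_suml.
  rewrite exchange_big; apply: eq_bigr => l _; rewrite /dotv !mulr_sumr.
  by apply: eq_bigr => j _; rewrite /vv; ring.
have -> : \sum_(j < n) (A^T *m be) j 0 * x j 0 = \sum_(i < m) be i 0 * (A *m x) i 0.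
  under eq_bigr do rewrite ATb_entry mulr_suml.
  rewrite exchange_big; apply: eq_bigr => i _; rewrite Ax_entry mulr_sumr.
  by apply: eq_bigr => j _; ring.
ring.
Qed.

Lemma card_sum (x : 'cV[R]_n) : (l0norm x)%:R = \sum_(j < n) (x j 0 != 0)%:R :> R.
Proof.
rewrite /l0norm -sum1_card big_mkcond natr_sum; apply: eq_bigr => j _.
case: (boolP (x j 0 != 0)) => H; first by rewrite mem_set.
rewrite ifF //; apply/negP => /set_mem /=; exact/negP.
Qed.

Lemma weak (x : 'cV[R]_n) (y : 'cV[R]_k) (al : 'cV[R]_k) (be : 'cV[R]_m) :
  (forall i, 0 <= lam i) -> 0 < eta ->
  Ufeas hk lam v A b x y -> (forall i, 0 <= be i 0) ->
  Hfun hk lam v c A b eta theta [ffun j => x j 0 != 0] al be <= Uobj m hk lam c eta theta x y.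
Proof.
move=> Hlam Heta [HA Hy] Hbe.
rewrite /Hfun /Uobj.
set w := c + _ + _.
rewrite (cx_decomp al be x) -/w.
have F1 : \sum_(i < k) lam (widen_ord hk i) * y i 0 ^+ 2 =
    \sum_(l < k) (sl l * dotv (vv l) x) ^+ 2.
  apply: eq_bigr => l _; rewrite -Hy exprMn sqr_sqrtr //.
have F2 : \sum_(i < m) be i 0 * (A *m x) i 0 <= dotv be b.
  by apply: ler_sum => i _; apply: ler_wpM2l.
have F3 : (l0norm x)%:R = \sum_(j < n) ([ffun j => x j 0 != 0] j)%:R :> R.
  by rewrite card_sum; apply: eq_bigr => j _; rewrite ffunE.
have F4 : 0 <= \sum_(j < n) w j 0 * x j 0 + eta^-1 * sqnorm x
     + eta / 4 * \sum_(j < n) ([ffun j => x j 0 != 0] j)%:R * w j 0 ^+ 2.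
  rewrite /sqnorm !mulr_sumr -!big_split; apply: sumr_ge0 => j _; rewrite ffunE /=.
  case: eqVneq => [-> | Hx] /=.
    by rewrite mulr0 expr0n /= mulr0 !mul0r mulr0 !addr0.
  rewrite mul1r.
  have -> : w j 0 * x j 0 + eta^-1 * x j 0 ^+ 2 + eta / 4 * w j 0 ^+ 2 =
     eta^-1 * (x j 0 + eta / 2 * w j 0) ^+ 2.
    by field; rewrite gt_eqF.
  by apply: mulr_ge0; [rewrite invr_ge0 ltW | apply: sqr_ge0].
have F5 : 0 <= \sum_(l < k) (sl l * dotv (vv l) x) ^+ 2
     - \sum_(l < k) al l 0 * (sl l * dotv (vv l) x) + 4^-1 * sqnorm al.
  rewrite /sqnorm mulr_sumr -sumrB -big_split; apply: sumr_ge0 => l _ /=.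
  have -> : (sl l * dotv (vv l) x) ^+ 2 - al l 0 * (sl l * dotv (vv l) x) + 4^-1 * al l 0 ^+ 2
    = (sl l * dotv (vv l) x - 2^-1 * al l 0) ^+ 2 by field.
  exact: sqr_ge0.
rewrite F1 F3.
move: F2 F4 F5.
move: (\sum_(j < n) w j 0 * x j 0) (eta^-1 * sqnorm x) (eta / 4 * _) (4^-1 * sqnorm al).
move=> s1 s2 s3 s4.
move: (\sum_(l < k) (sl l * dotv (vv l) x) ^+ 2) (\sum_(l < k) al l 0 * (sl l * dotv (vv l) x)).
move: (\sum_(i < m) be i 0 * (A *m x) i 0) (dotv be b) (\sum_(j < n) _).
move=> a1 a2 a3 a4 a5.
lra.
Qed.

Section Strong.
Variable z : {ffun 'I_n -> bool}.
Hypothesis Hlam : forall i, 0 <= lam i.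
Hypothesis Heta : 0 < eta.
Hypothesis Htheta : 0 < theta.

Let se : R := Num.sqrt eta.
Let zr (j : 'I_n) : R := (z j)%:R.
Definition mask (u : 'cV[R]_n) : 'cV[R]_n := \col_j (zr j * u j 0).
Definition Gf (i : nat) : 'cV[R]_(n + k) :=
  oapp (fun i' : 'I_m => col_mx (se *: mask (\col_j A i' j)) 0) 0 (insub i : option 'I_m).
Definition hf (i : nat) : R := oapp (fun i' : 'I_m => b i' 0) 0 (insub i : option 'I_m).
Definition Ef (i : nat) : 'cV[R]_(n + k) :=
  oapp (fun l : 'I_k => col_mx (- (sl l * se) *: mask (vv l)) (delta_mx l 0)) 0 (insub i : option 'I_k).
Definition ff (i : nat) : R := 0.
Definition ac : 'cV[R]_(n + k) := col_mx (- (se / 2) *: mask c) 0.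

Lemma addE p q (M1 M2 : 'M[R]_(p, q)) i j : (M1 + M2) i j = M1 i j + M2 i j.
Proof. by rewrite mxE. Qed.

Lemma oppE p q (M : 'M[R]_(p, q)) i j : (- M) i j = - M i j.
Proof. by rewrite mxE. Qed.
Lemma scaleE p q (a0 : R) (M : 'M[R]_(p, q)) i j : (a0 *: M) i j = a0 * M i j.
Proof. by rewrite mxE. Qed.

Lemma insub_ord p (i : 'I_p) : (insub (nat_of_ord i) : option 'I_p) = Some i.
Proof. exact: valK. Qed.

Lemma dotv_col (X : 'cV[R]_n) (Y : 'cV[R]_k) (t : 'cV[R]_(n + k)) :
  dotv (col_mx X Y) t = \sum_(j < n) X j 0 * t (lshift k j) 0 + \sum_(l < k) Y l 0 * t (rshift n l) 0.
Proof. by rewrite /dotv big_split_ord /=; congr (_ + _); apply: eq_bigr => j _; rewrite ?col_mxEu ?col_mxEd. Qed.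

Lemma zr2 j : zr j * zr j = zr j.
Proof. by rewrite /zr; case: (z j); rewrite ?mul1r ?mul0r. Qed.

Lemma se2 : se * se = eta.
Proof. by rewrite -expr2 sqr_sqrtr // ltW. Qed.

Lemma se_gt0 : 0 < se.
Proof. by rewrite sqrtr_gt0. Qed.

Lemma sl2 l : sl l * sl l = lam (widen_ord hk l).
Proof. by rewrite -expr2 sqr_sqrtr. Qed.

Lemma combG_x (mu : nat -> R) j :
  comb Gf mu m (lshift k j) 0 = se * zr j * \sum_(i < m) A i j * mu i.
Proof.
rewrite /comb summxE mulr_sumr; apply: eq_bigr => i _.
by rewrite /Gf insub_ord /= mxE col_mxEu !mxE; ring.
Qed.
Lemma combG_y (mu : nat -> R) l : comb Gf mu m (rshift n l) 0 = 0.
Proof.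
rewrite /comb summxE big1 // => i _.
by rewrite /Gf insub_ord /= mxE col_mxEd mxE mulr0.
Qed.
Lemma combE_x (nu : nat -> R) j :
  comb Ef nu k (lshift k j) 0 = - se * zr j * \sum_(l < k) vv l j 0 * (sl l * nu l).
Proof.
rewrite /comb summxE mulr_sumr; apply: eq_bigr => l _.
by rewrite /Ef insub_ord /= mxE col_mxEu !mxE; ring.
Qed.
Lemma combE_y (nu : nat -> R) l : comb Ef nu k (rshift n l) 0 = nu l.
Proof.
rewrite /comb summxE (bigD1 l) //= big1 => [|l' Hl'].
  by rewrite /Ef insub_ord /= mxE col_mxEd mxE !eqxx mulr1 addr0.
by rewrite /Ef insub_ord /= mxE col_mxEd mxE eq_sym (negbTE Hl') mulr0.
Qed.

Lemma dotG (i : 'I_m) t : dotv (Gf i) t = \sum_(j < n) se * (zr j * A i j) * t (lshift k j) 0.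
Proof.
rewrite /Gf insub_ord /= dotv_col [X in _ + X]big1 ?addr0.
  by apply: eq_bigr => j _; rewrite !mxE.
by move=> l _; rewrite mxE mul0r.
Qed.

Lemma dotE (l : 'I_k) t : dotv (Ef l) t =
  \sum_(j < n) - (sl l * se) * (zr j * vv l j 0) * t (lshift k j) 0 + t (rshift n l) 0.
Proof.
rewrite /Ef insub_ord /= dotv_col; congr (_ + _).
  by apply: eq_bigr => j _; rewrite !mxE.
rewrite (bigD1 l) //= big1 => [|l' Hl']; first by rewrite mxE !eqxx mul1r addr0.
by rewrite mxE (negbTE Hl') mul0r.
Qed.

Lemma sup_pinfty (S : set (\bar R)) :
  (forall r : R, exists2 e, S e & (r%:E <= e)%E) -> ereal_sup S = +oo%E.
Proof.
move=> H; case E: (ereal_sup S) => [x| |] //.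
  have [e Se He] := H (x + 1).
  have := ereal_sup_ubound Se; rewrite E => He2.
  have : ((x + 1)%:E <= x%:E)%E by exact: (le_trans He He2).
  rewrite lee_fin => Hc; exfalso; move: Hc; apply/negP; rewrite -ltNge ltrDl ltr01 //.
have [e Se He] := H 0.
have := ereal_sup_ubound Se; rewrite E => He2.
by have := le_trans He He2.
Qed.

Definition Hset := [set r : \bar R | exists (alpha : 'cV[R]_k) (beta : 'cV[R]_m),
              (forall i, 0 <= beta i 0) /\
              r = (Hfun hk lam v c A b eta theta z alpha beta)%:E]%classic.

Lemma strong_sol t (mu nu : nat -> R) :
  (forall i, (i < m)%N -> 0 <= mu i) ->
  (forall i, (i < m)%N -> dotv (Gf i) t <= hf i) ->
  (forall i, (i < k)%N -> dotv (Ef i) t = ff i) ->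
  t = ac - 2^-1 *: (comb Gf mu m + comb Ef nu k) ->
  combr hf mu m = \sum_(i < m) mu i * dotv (Gf i) t ->
  (Ustar hk lam v c A b eta theta <= ereal_sup Hset)%E.
Proof.
move=> Hmu Hle Heq Ht Hsl.
set al : 'cV[R]_k := \col_l (- nu l).
set be : 'cV[R]_m := \col_i mu i.
set w := c + Vmat hk v *m sqrtLam hk lam *m al + A^T *m be.
have Hw : forall j, w j 0 = c j 0 - \sum_(l < k) vv l j 0 * (sl l * nu l) + \sum_(i < m) A i j * mu i.
  move=> j; rewrite /w !addE VSa_entry ATb_entry -sumrN; congr (_ + _ + _).
    by apply: eq_bigr => l _; rewrite mxE !mulrN.
  by apply: eq_bigr => i _; rewrite mxE.
set tx := fun j => t (lshift k j) 0.
have HTX : forall j, tx j = - (se / 2) * zr j * w j 0.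
  move=> j; rewrite /tx Hw {1}Ht addE oppE scaleE addE combG_x combE_x /ac col_mxEu scaleE mxE.
  rewrite /zr; case: (z j) => /=; move: (se) (\sum_(i < m) _) (\sum_(l < k) _) => s1 s2 s3; ring.
have HTY : forall l, t (rshift n l) 0 = - nu l / 2.
  move=> l; rewrite {1}Ht addE oppE scaleE addE combG_y combE_y /ac col_mxEd mxE; ring.
have Hz : forall j, zr j * tx j = tx j.
  by move=> j; rewrite HTX !mulrA (mulrC (zr j)) -!mulrA (mulrA (zr j)) zr2.
set x : 'cV[R]_n := \col_j (se * tx j).
have Hx : forall j, x j 0 = - (eta / 2) * zr j * w j 0.
  by move=> j; rewrite mxE HTX !mulrA -se2; field.
have R1 : forall l, sl l * dotv (vv l) x = al l 0 / 2.
  move=> l; have := Heq l (ltn_ord l); rewrite dotE HTY /ff mxE => H0.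
  have -> : sl l * dotv (vv l) x = sl l * se * \sum_(j < n) zr j * vv l j 0 * tx j.
    rewrite /dotv !mulr_sumr; apply: eq_bigr => j _.
    by rewrite mxE -[in LHS](Hz j); ring.
  move: H0; rewrite -[X in X + _ = _ -> _]/(\sum_(j < n) _).
  have -> : \sum_(j < n) - (sl l * se) * (zr j * vv l j 0) * t (lshift k j) 0 =
      - (sl l * se * \sum_(j < n) zr j * vv l j 0 * tx j).
    by rewrite mulr_sumr -sumrN; apply: eq_bigr => j _; rewrite /tx; ring.
  move=> H0; lra.
have HG : forall i : 'I_m, dotv (Gf i) t = (A *m x) i 0.
  move=> i; rewrite dotG Ax_entry; apply: eq_bigr => j _.
  by rewrite mxE -[in RHS](Hz j) /tx; ring.
have R2 : dotv be b = \sum_(i < m) be i 0 * (A *m x) i 0.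
  have := Hsl; rewrite /combr => Hs.
  rewrite /dotv; under eq_bigr do rewrite mxE.
  under [RHS]eq_bigr do rewrite mxE -HG.
  rewrite -Hs; apply: eq_bigr => i _; by rewrite /hf insub_ord.
set y : 'cV[R]_k := \col_l dotv (vv l) x.
have Hfeas : Ufeas hk lam v A b x y.
  split; last by move=> i; rewrite mxE.
  move=> i; rewrite -HG; have := Hle i (ltn_ord i); by rewrite /hf insub_ord.
apply: (@le_trans _ _ (Uobj m hk lam c eta theta x y)%:E).
  by apply: ereal_inf_lbound; exists x, y.
apply: (@le_trans _ _ (Hfun hk lam v c A b eta theta z al be)%:E); last first.
  apply: ereal_sup_ubound; exists al, be; split => // i; rewrite mxE; exact: Hmu.
rewrite lee_fin /Uobj /Hfun (cx_decomp al be x) -/w -R2.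
have S1 : \sum_(j < n) w j 0 * x j 0 = - (eta / 2) * \sum_(j < n) (z j)%:R * w j 0 ^+ 2.
  by rewrite mulr_sumr; apply: eq_bigr => j _; rewrite Hx /zr; ring.
have S2 : eta^-1 * sqnorm x = eta / 4 * \sum_(j < n) (z j)%:R * w j 0 ^+ 2.
  rewrite /sqnorm !mulr_sumr; apply: eq_bigr => j _; rewrite Hx /zr.
  by case: (z j) => /=; field; rewrite gt_eqF.
have S3 : \sum_(l < k) al l 0 * (sl l * dotv (vv l) x) = 2^-1 * sqnorm al.
  by rewrite /sqnorm mulr_sumr; apply: eq_bigr => l _; rewrite R1; field.
have S4 : \sum_(i < k) lam (widen_ord hk i) * y i 0 ^+ 2 = 4^-1 * sqnorm al.
  rewrite /sqnorm mulr_sumr; apply: eq_bigr => l _.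
  rewrite -sl2 mxE.
  have -> : sl l * sl l * dotv (vv l) x ^+ 2 = (sl l * dotv (vv l) x) ^+ 2 by ring.
  by rewrite R1; field.
have S6 : (l0norm x)%:R <= \sum_(j < n) (z j)%:R :> R.
  rewrite card_sum; apply: ler_sum => j _; rewrite Hx /zr.
  by case: (z j) => /=; rewrite ?mulr0 ?mul0r ?eqxx ?ler01 ?lexx //; case: (_ != _).
have S7 := ler_wpM2l (ltW Htheta) S6.
rewrite S1 S2 S3 S4.
move: S7; set q := \sum_(j < n) (z j)%:R * w j 0 ^+ 2; move=> S7; lra.
Qed.

Lemma strong_cert (mu nu : nat -> R) :
  (forall i, (i < m)%N -> 0 <= mu i) ->
  comb Gf mu m + comb Ef nu k = 0 ->
  combr hf mu m + combr ff nu k < 0 ->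
  ereal_sup Hset = +oo%E.
Proof.
move=> Hmu Hc Hr.
have Hnu : forall l : 'I_k, nu l = 0.
  by move=> l; have := congr1 (fun M : 'cV[R]_(n + k) => M (rshift n l) 0) Hc; rewrite /= addE combG_y combE_y mxE add0r.
have Hq : forall j, zr j * \sum_(i < m) A i j * mu i = 0.
  move=> j; have := congr1 (fun M : 'cV[R]_(n + k) => M (lshift k j) 0) Hc; rewrite /= addE combG_x combE_x mxE.
  have -> : \sum_(l < k) vv l j 0 * (sl l * nu l) = 0 by apply: big1 => l _; rewrite (Hnu l) !mulr0.
  rewrite mulr0 addr0 -mulrA => /eqP; rewrite mulf_eq0 => /orP [|/eqP //].
  by rewrite gt_eqF // se_gt0.
set B := \sum_(i < m) mu i * b i 0.
have HB : B < 0.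
  move: Hr; rewrite /combr [X in _ + X]big1 => [|l _]; last by rewrite /ff mulr0.
  by rewrite addr0 /B; under eq_bigr do rewrite /hf insub_ord /=.
set K := theta * \sum_(j < n) (z j)%:R - eta / 4 * \sum_(j < n) zr j * c j 0 ^+ 2.
apply: sup_pinfty => r.
set s := `|r - K| / (- B).
have Hs : 0 <= s by rewrite divr_ge0 // oppr_ge0 ltW.
exists (Hfun hk lam v c A b eta theta z 0 (s *: \col_i mu i))%:E.
  exists 0, (s *: \col_i mu i); split => // i; rewrite !mxE; apply: mulr_ge0 => //; exact: Hmu.
rewrite lee_fin /Hfun mulmx0 addr0.
have -> : \sum_(j < n) (z j)%:R * (c + A^T *m (s *: \col_i mu i)) j 0 ^+ 2 =
    \sum_(j < n) zr j * c j 0 ^+ 2.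
  apply: eq_bigr => j _; rewrite addE ATb_entry.
  have -> : \sum_(i < m) A i j * (s *: \col_i mu i) i 0 = s * \sum_(i < m) A i j * mu i.
    by rewrite mulr_sumr; apply: eq_bigr => i _; rewrite !mxE; ring.
  have := Hq j; move: (\sum_(i < m) A i j * mu i) => qq Hqq.
  have -> : (z j)%:R * (c j 0 + s * qq) ^+ 2 = zr j * c j 0 ^+ 2 + (zr j * qq) * (s * (2 * c j 0 + s * qq)).
    by rewrite /zr; ring.
  by rewrite Hqq mul0r addr0.
have -> : dotv (s *: \col_i mu i) b = s * B.
  by rewrite dotvZl /B /dotv; congr (_ * _); apply: eq_bigr => i _; rewrite mxE.
have -> : sqnorm (0 : 'cV[R]_k) = 0.
  by rewrite /sqnorm big1 // => l _; rewrite mxE expr0n.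
have -> : s * B = - `|r - K| by rewrite /s; field; rewrite lt_eqF.
have := ler_norm (r - K); rewrite /K; lra.
Qed.

End Strong.

End App.

Theorem propositionC1 (R : realType) (n m k : nat) (hk : (k <= n)%N)
  (Q : 'M[R]_n) (lam : 'I_n -> R) (v : 'I_n -> 'cV[R]_n)
  (c : 'cV[R]_n) (A : 'M[R]_(m, n)) (b : 'cV[R]_m) (eta theta : R) :
  Q^T = Q ->
  (forall x : 'cV[R]_n, 0 <= (x^T *m Q *m x) 0 0) ->
  Q = \sum_(i < n) lam i *: (v i *m (v i)^T) ->
  (forall i j : 'I_n, (i <= j)%N -> lam j <= lam i) ->
  (forall i : 'I_n, 0 <= lam i) ->
  (forall i j : 'I_n, dotv (v i) (v j) = (i == j)%:R) ->
  0 < eta -> 0 < theta ->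
  Ustar hk lam v c A b eta theta = minmaxH hk lam v c A b eta theta.
Proof.
move=> _ _ _ _ Hlam _ Heta Htheta.
apply/eqP; rewrite eq_le; apply/andP; split.
  rewrite /minmaxH; elim/big_ind: _ => [|x y Hx Hy|z _]; first exact: leey.
    by rewrite le_min Hx Hy.
  case: (key R (n + k) (Gf R n m k A eta z) (hf R m b) m (Ef R n k hk lam v eta z) (ff R) k (ac R n k c eta z)).
    move=> [mu [nu [Hmu [Hc Hr]]]].
    by rewrite -/(Hset R n m k hk lam v c A b eta theta z) (strong_cert R n m k hk lam v c A b eta theta z Heta mu nu Hmu Hc Hr) leey.
  move=> [t [mu [nu [Hmu [Hle [Heq [Ht Hsl]]]]]]].
  exact: (strong_sol R n m k hk lam v c A b eta theta z Hlam Heta Htheta t mu nu Hmu Hle Heq Ht Hsl).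
apply/ereal_infP => _ [x [y [Hf ->]]].
rewrite /minmaxH (bigD1 [ffun j => x j 0 != 0]) //=.
rewrite ge_min; apply/orP; left.
apply/ereal_supP => _ [al [be [Hbe ->]]].
rewrite lee_fin; exact: weak.
Qed.
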